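(* Let $X$ be a reflexive Banach space with dual $X^*$, let $f\colon X\to\mathbb{R}$ and $\psi^*\colon X^*\to\mathbb{R}$ be differentiable, let $N\ge 1$, and let real coefficients $\{a_{k,i}\}_{0\le i<k\le N}$ and $\{b_{k,i}\}_{0\le i\le k\le N}$ be given, with the convention $b_{0,0}=-1$. Assume \[ \sum_{j=0}^{k+1} b_{k+1,j}=0\qquad\text{for } k=0,1,\dots,N-1 . \] Let $q_0\in X$ be arbitrary, set $r_0=-b_{N,N}\nabla f(q_0)$, and define for $k=0,1,\dots,N-1$ \[ q_{k+1}=q_k-\sum_{i=0}^{k} a_{N-i,\,N-1-k}\,\nabla\psi^*(r_i),\qquad r_{k+1}=r_k-\sum_{i=0}^{k+1} b_{N-i,\,N-1-k}\,\nabla f(q_i). \] Then $r_N=\nabla f(q_N)$.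
   Context: The iteration in the claim is called the mirror dual of the $N$-step coupled first-order method (CFOM) with the same coefficients, where the CFOM (for differentiable $f\colon X\to\mathbb{R}$, $\phi^*\colon X^*\to\mathbb{R}$) is: $y_0\in X^*$, $x_0=\nabla\phi^*(y_0)$, and for $k=0,\dots,N-1$, $y_{k+1}=y_k-\sum_{i=0}^{k}a_{k+1,i}\nabla f(x_i)$, $x_{k+1}=x_k-\sum_{i=0}^{k+1}b_{k+1,i}\nabla\phi^*(y_i)$. Gradients $\nabla f(x)\in X^*$ are Fréchet gradients, and $\nabla\psi^*(r)\in X^{**}=X$. *)

(* Defs.v *)
From mathcomp Require Import all_boot all_order all_algebra.
From mathcomp Require Import all_classical all_reals all_analysis.
Set Implicit Arguments. Unset Strict Implicit. Unset Printing Implicit Defensive.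
Import Order.TTheory GRing.Theory Num.Theory.
Import numFieldNormedType.Exports.
Local Open Scope ring_scope.

Definition lin_functional (R : realType) (V : lmodType R) (phi : V -> R) :=
  forall (c : R) (u v : V), phi (c *: u + v) = c * phi u + phi v.

(* [reflexive_duality pair]: the Banach spaces X and Xs, with the bilinear
   pairing [pair : Xs -> X -> R], realise Xs as the (topological) dual X^* of X
   (every continuous linear functional on X is [pair y] for some y, and the
   norm of Xs is the dual norm), and X is reflexive: every continuous linear
   functional on Xs = X^* is evaluation [fun y => pair y x] at some x in X. *)
Definition reflexive_duality (R : realType) (X Xs : completeNormedModType R)
  (pair : Xs -> X -> R) : Prop :=
  (forall y, lin_functional (pair y)) /\
      (forall x, lin_functional (fun y => pair y x)) /\
      (forall y x, `|pair y x| <= `|y| * `|x|) /\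
      (forall y (e : R), 0 < e -> exists x : X, `|x| <= 1 /\ `|y| - e < `|pair y x|) /\
      (forall phi : X -> R, lin_functional phi -> continuous phi ->
          exists y, phi = pair y) /\
      (forall phi : Xs -> R, lin_functional phi -> continuous phi ->
          exists x, phi = fun y => pair y x).

Definition is_gradient (R : realType) (X Xs : completeNormedModType R)
  (pair : Xs -> X -> R) (f : X -> R) (g : X -> Xs) : Prop :=
  forall x, differentiable f x /\ ('d f x : X -> R) = pair (g x).

(* [h] is the Frechet gradient of [psi : Xs -> R], an element of X^** = X. *)
Definition is_gradient_dual (R : realType) (X Xs : completeNormedModType R)
  (pair : Xs -> X -> R) (psi : Xs -> R) (h : Xs -> X) : Prop :=
  forall y, differentiable psi y /\ ('d psi y : Xs -> R) = (fun s => pair s (h y)).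

(* Main.v *)
Require Import Defs.
From mathcomp Require Import all_boot all_order all_algebra.
From mathcomp Require Import all_classical all_reals all_analysis.
From mathcomp Require Import zify.
Import Order.TTheory GRing.Theory Num.Theory.
Import numFieldNormedType.Exports.
Local Open Scope ring_scope.

Theorem proposition3p1 (R : realType) (X Xs : completeNormedModType R)
  (pair : Xs -> X -> R) (f : X -> R) (psi : Xs -> R)
  (gf : X -> Xs) (gpsi : Xs -> X) (N : nat) (a b : nat -> nat -> R)
  (q : nat -> X) (r : nat -> Xs) :
  reflexive_duality pair ->
  is_gradient pair f gf ->
  is_gradient_dual pair psi gpsi ->
  (1 <= N)%N ->
  b 0%N 0%N = -1 ->
  (forall k : nat, (k < N)%N -> \sum_(j < k.+2) b k.+1 j = 0) ->
  r 0%N = (- b N N) *: gf (q 0%N) ->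
  (forall k : nat, (k < N)%N ->
     q k.+1 = q k - \sum_(i < k.+1) a (N - i)%N (N - 1 - k)%N *: gpsi (r i)) ->
  (forall k : nat, (k < N)%N ->
     r k.+1 = r k - \sum_(i < k.+2) b (N - i)%N (N - 1 - k)%N *: gf (q i)) ->
  r N = gf (q N).
Proof.
move=> _ _ _ N1 b00 hb r0 _ hr.
have inv : forall n, (n <= N)%N -> r n = \sum_(i < n.+1)
   (- \sum_(N - n <= j < (N - i).+1) b (N - i)%N j) *: gf (q i).
  elim=> [|n IH] hn.
    by rewrite big_ord_recr big_ord0 /= add0r subn0 big_nat1 r0.
  rewrite hr // IH ?(ltnW hn) //.
  have e1 : (N - 1 - n = N - n.+1)%N by lia.
  rewrite e1 [in RHS]big_ord_recr [X in _ - X]big_ord_recr /=.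
  have e2 : (N - n.+1).+1 = (N - n)%N by lia.
  rewrite (big_nat1 _ (N - n.+1)%N).
  have -> : \sum_(i < n.+1)
      (- \sum_(N - n.+1 <= j < (N - i).+1) b (N - i)%N j) *: gf (q i) =
    \sum_(i < n.+1) ((- \sum_(N - n <= j < (N - i).+1) b (N - i)%N j) *: gf (q i)
       - b (N - i)%N (N - n.+1)%N *: gf (q i)).
    apply: eq_bigr => i _.
    have hi := ltn_ord i.
    rewrite big_ltn; last by lia.
    by rewrite e2 -scalerBl opprD addrC.
  rewrite big_split /= sumrN scaleNr.
  rewrite -(addrA _ _ (- _)) opprD.
  by [].
have := inv N (leqnn N).
rewrite subnn big_ord_recr (_ : (N - @ord_max N)%N = 0%N); last by rewrite /= subnn.
rewrite big_nat1 b00 opprK scale1r => ->.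
rewrite big1; first by rewrite /= add0r.
move=> i _.
have hi := ltn_ord i.
have e : ((N - i) = (N - i - 1).+1)%N by lia.
rewrite e big_mkord hb ?oppr0 ?scale0r //; lia.
Qed.
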